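(* Let $k$ be a field. In $\operatorname{Fun}(\Gamma_-^o,k)$, let $P=s_2$ and let $\eta:s_2\to s_1=k$ be the canonical map. Let $P_\bullet$ be the complex with $P_i=P^{\otimes i}$ ($P_0=k$) and differential $d_i:P_i\to P_{i-1}$, $$d_i=\sum_{1\le j\le i}(-1)^j\,\operatorname{id}^{\otimes(j-1)}\otimes\eta\otimes\operatorname{id}^{\otimes(i-j)}.$$ Then $P_\bullet$ is a projective resolution of $t_1$ in $\operatorname{Fun}(\Gamma_-^o,k)$.
   Context: $\Gamma_-$ is the category of finite non-empty sets and surjective maps; $[n]$ denotes a set with $n$ elements. $s_n\in\operatorname{Fun}(\Gamma_-^o,k)$ is the functor represented by $[n]$: $s_n([m])=k[\Gamma_-([m],[n])]$; thus $s_1$ is the constant functor $k$, and the unique maps $[n]\to[1]$ give canonical maps $s_n\to s_1$. $t_1\in\operatorname{Fun}(\Gamma_-^o,k)$ is the functor co-represented by $[1]$: $t_1([1])=k$, $t_1([n])=0$ for $n\ge2$; it is a quotient of $s_1=k$, which gives the augmentation $P_0=k\to t_1$. Tensor products are pointwise. *)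

(* Defs.v *)
From HB Require Import structures.
From mathcomp Require Import all_boot all_order all_algebra.
Set Implicit Arguments.
Unset Strict Implicit.
Unset Printing Implicit Defensive.
Import GRing.Theory.
Local Open Scope ring_scope.

(* Skeleton of Gamma_- : the object [n.+1] (finite set with n.+1 elements) is
   represented by the index n : nat, with underlying set 'I_n.+1.
   A map [m.+1] -> [n.+1] is a finite function; it is a morphism of Gamma_-
   iff it is surjective. *)
Definition surjb (m n : nat) (f : {ffun 'I_m.+1 -> 'I_n.+1}) : bool :=
  [forall j, exists i, f i == j].

(* A functor Gamma_-^o -> k-Vect: a k-vector space for each object and a
   (contravariant) action of maps; laws only required on surjections. *)
Record fdata (k : fieldType) := FData {
  fobj : nat -> lmodType k;
  fmap : forall m n : nat, {ffun 'I_m.+1 -> 'I_n.+1} -> fobj n -> fobj m }.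
Arguments fobj {k} f n : rename.
Arguments fmap {k} f {m n} _ _ : rename.

Definition is_functor (k : fieldType) (F : fdata k) : Prop :=
  (forall m n (f : {ffun 'I_m.+1 -> 'I_n.+1}), surjb f ->
     forall (a : k) (x y : fobj F n),
       fmap F f (a *: x + y) = a *: fmap F f x + fmap F f y) /\
  (forall n (x : fobj F n), fmap F [ffun i : 'I_n.+1 => i] x = x) /\
  (forall l m n (g : {ffun 'I_l.+1 -> 'I_m.+1}) (f : {ffun 'I_m.+1 -> 'I_n.+1}),
     surjb g -> surjb f -> forall x : fobj F n,
       fmap F [ffun i => f (g i)] x = fmap F g (fmap F f x)).

Definition is_nat (k : fieldType) (F G : fdata k)
    (t : forall n, fobj F n -> fobj G n) : Prop :=
  (forall n (a : k) (x y : fobj F n), t n (a *: x + y) = a *: t n x + t n y) /\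
  (forall m n (f : {ffun 'I_m.+1 -> 'I_n.+1}), surjb f ->
     forall x : fobj F n, t m (fmap F f x) = fmap G f (t n x)).

(* projective object of Fun(Gamma_-^o, k): lifting along epimorphisms
   (= objectwise surjective natural transformations) *)
Definition projective (k : fieldType) (P : fdata k) : Prop :=
  forall (G H : fdata k), is_functor G -> is_functor H ->
  forall (pi : forall n, fobj G n -> fobj H n)
         (phi : forall n, fobj P n -> fobj H n),
    is_nat pi -> (forall n (y : fobj H n), exists x, pi n x = y) ->
    is_nat phi ->
    exists psi : forall n, fobj P n -> fobj G n,
      is_nat psi /\ forall n (x : fobj P n), pi n (psi n x) = phi n x.

(* Surjections [m.+1] -> [2] : the basis of s_2([m.+1]). *)
Definition Surj2 (m : nat) : finType := {f : {ffun 'I_m.+1 -> 'I_2} | surjb f}.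

(* i-tuples of such surjections : the basis of (s_2)^{(x) i}([m.+1])
   (pointwise tensor product k[X]^{(x) i} = k[X^i]). *)
Definition Tup (i m : nat) : finType := {ffun 'I_i -> Surj2 m}.

(* P_i([m.+1]) = k[Tup i m], as finitely supported = all functions Tup i m -> k *)
Definition Pobj (k : fieldType) (i m : nat) : lmodType k := {ffun Tup i m -> k^o}.

(* action of f : [m.+1] -> [n.+1] : basis element x |-> (x_l o f)_l *)
Definition Pmap (k : fieldType) (i m n : nat) (f : {ffun 'I_m.+1 -> 'I_n.+1})
    (v : Pobj k i n) : Pobj k i m :=
  [ffun y : Tup i m =>
     \sum_(x : Tup i n | [forall l, [forall a, val (x l) (f a) == val (y l) a]]) v x].

Definition Pfun (k : fieldType) (i : nat) : fdata k :=
  @FData k (fun m => Pobj k i m) (fun m n f v => Pmap f v).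

(* deleting the j-th tensor factor (0-indexed) *)
Definition delta (i : nat) (j : 'I_i.+1) (m : nat) (x : Tup i.+1 m) : Tup i m :=
  [ffun l => x (lift j l)].

(* d_{i+1} : P_{i+1} -> P_i, basis x |-> sum_{j=1}^{i+1} (-1)^j (x with j-th factor
   removed), i.e. sum_j (-1)^j id^{(x)(j-1)} (x) eta (x) id^{(x)(i+1-j)},
   eta : s_2 -> s_1 = k sending every surjection to 1. *)
Definition dmap (k : fieldType) (i m : nat) (v : Pobj k i.+1 m) : Pobj k i m :=
  [ffun y : Tup i m =>
     \sum_(j < i.+1) (-1) ^+ (j.+1) * \sum_(x : Tup i.+1 m | delta j x == y) v x].

(* t_1 : t_1([1]) = k, t_1([n]) = 0 for n >= 2 ; the object index 0 is [1]. *)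
Definition T1obj (k : fieldType) (m : nat) : lmodType k := {ffun 'I_(m == 0%N) -> k^o}.

Definition T1map (k : fieldType) (m n : nat) (f : {ffun 'I_m.+1 -> 'I_n.+1})
    (v : T1obj k n) : T1obj k m :=
  [ffun a : 'I_(m == 0%N) => \sum_(b : 'I_(n == 0%N)) v b].

Definition T1fun (k : fieldType) : fdata k :=
  @FData k (fun m => T1obj k m) (fun m n f v => T1map f v).

(* augmentation P_0 = k -> t_1 (P_0([m.+1]) = k[one point] = k). *)
Definition eps (k : fieldType) (m : nat) (v : Pobj k 0 m) : T1obj k m :=
  [ffun _ => \sum_x v x].

(* Main.v *)
Require Import Defs.
From HB Require Import structures.
From mathcomp Require Import all_boot all_order all_algebra.
Set Implicit Arguments.
Unset Strict Implicit.
Unset Printing Implicit Defensive.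
Import GRing.Theory.
Local Open Scope ring_scope.

Lemma sum_fiber (R : nmodType) (A B : finType) (phi : A -> B) (Q : pred B) (F : A -> R) :
  \sum_(y | Q y) \sum_(x | phi x == y) F x = \sum_(x | Q (phi x)) F x.
Proof.
rewrite (partition_big phi Q) //=; apply: eq_bigr => y Qy; apply: eq_bigl => x.
by case: eqP => [->|]; rewrite ?Qy ?andbF.
Qed.

Lemma surj_comp m n p (g : {ffun 'I_m.+1 -> 'I_n.+1}) (f : {ffun 'I_p.+1 -> 'I_m.+1}) :
  surjb g -> surjb f -> surjb [ffun a => g (f a)].
Proof.
move=> /forallP hg /forallP hf; apply/forallP => c.
have /existsP [b /eqP hb] := hg c; have /existsP [a /eqP ha] := hf b.
by apply/existsP; exists a; rewrite ffunE ha hb.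
Qed.

Definition tcomp i m n (f : {ffun 'I_m.+1 -> 'I_n.+1}) (hf : surjb f) (x : Tup i n) : Tup i m :=
  [ffun l => (exist _ [ffun a => val (x l) (f a)] (surj_comp (valP (x l)) hf) : Surj2 m)].

Lemma tcompE i m n (f : {ffun 'I_m.+1 -> 'I_n.+1}) (hf : surjb f) (x : Tup i n) l a :
  val (tcomp hf x l) a = val (x l) (f a).
Proof. by rewrite /tcomp ffunE /= ffunE. Qed.

Lemma tup_eqP i m (x y : Tup i m) :
  reflect (forall l a, val (x l) a = val (y l) a) (x == y).
Proof.
apply: (iffP eqP) => [-> //|h]; apply/ffunP => l; apply/val_inj/ffunP => a; exact: h.
Qed.

Lemma cond_tcomp i m n (f : {ffun 'I_m.+1 -> 'I_n.+1}) (hf : surjb f) (x : Tup i n) (y : Tup i m) :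
  [forall l, [forall a, val (x l) (f a) == val (y l) a]] = (tcomp hf x == y).
Proof.
apply/forallP/tup_eqP => [h l a|h l]; last by apply/forallP => a; rewrite -h tcompE.
by rewrite tcompE; apply/eqP; have /forallP := h l; apply.
Qed.

Lemma PmapE (k : fieldType) i m n (f : {ffun 'I_m.+1 -> 'I_n.+1}) (hf : surjb f) (v : Pobj k i n) y :
  Pmap f v y = \sum_(x | tcomp hf x == y) v x.
Proof. by rewrite ffunE; apply: eq_bigl => x; rewrite cond_tcomp. Qed.

Lemma Pfun_functor (k : fieldType) i : is_functor (Pfun k i).
Proof.
split; [|split].
- move=> m n f _ a x y /=; apply/ffunP => z; rewrite !ffunE.
  rewrite (eq_bigr (fun w => a * x w + y w)) => [|w _]; last by rewrite !ffunE.
  by rewrite big_split /= -mulr_sumr.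
- move=> n v /=; apply/ffunP => y; rewrite ffunE (big_pred1 y) // => x /=.
  apply/forallP/idP => [h|/eqP -> l]; last by apply/forallP => a; rewrite ffunE.
  apply/tup_eqP => l a; have /forallP := h l; move/(_ a); by rewrite ffunE => /eqP.
- move=> l m n g f hg hf v /=; apply/ffunP => y.
  rewrite (PmapE hg) (eq_bigr (fun w => \sum_(x | tcomp hf x == w) v x)); last first.
    by move=> w _; rewrite (PmapE hf).
  rewrite sum_fiber ffunE; apply: eq_bigl => x.
  apply/forallP/tup_eqP => [h j a|h j]; last by apply/forallP => a; rewrite ffunE -h !tcompE.
  by rewrite tcompE; have /forallP := h j; move/(_ a); rewrite ffunE tcompE => /eqP.
Qed.

Lemma surj0 n (f : {ffun 'I_1 -> 'I_n.+1}) : surjb f -> n = 0%N.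
Proof.
move=> /forallP h.
have /existsP [a /eqP ha] := h ord0; have /existsP [b /eqP hb] := h ord_max.
rewrite !ord1 in ha hb; move: hb; rewrite ha => /(congr1 val) /= ->. done.
Qed.

Lemma surj2_0 (s : Surj2 0) : False.
Proof. by case: s => f /surj0. Qed.

Lemma lin_morph (k : fieldType) (U W : lmodType k) (t : U -> W) :
  (forall a x y, t (a *: x + y) = a *: t x + t y) ->
  [/\ t 0 = 0, forall x y, t (x + y) = t x + t y, forall a x, t (a *: x) = a *: t x
    & forall x, t (- x) = - t x].
Proof.
move=> ht.
have t0 : t 0 = 0.
  have := ht 1 0 0; rewrite !scale1r addr0 => h.
  by apply: (@addrI _ (t 0)); rewrite addr0 -h.
have tD : forall x y, t (x + y) = t x + t y by move=> x y; have := ht 1 x y; rewrite !scale1r.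
have tZ : forall a x, t (a *: x) = a *: t x by move=> a x; have := ht a x 0; rewrite !addr0 t0 addr0.
split=> // x; by rewrite -scaleN1r tZ scaleN1r.
Qed.

Lemma lin_sum (k : fieldType) (U W : lmodType k) (t : U -> W) (I : Type) (r : seq I) (P : pred I) (F : I -> U) :
  (forall a x y, t (a *: x + y) = a *: t x + t y) ->
  t (\sum_(j <- r | P j) F j) = \sum_(j <- r | P j) t (F j).
Proof. by move=> /lin_morph [t0 tD _ _]; apply: big_morph. Qed.

Definition t0 m : Tup 0 m := ffun0 (card_ord 0).

Lemma tup0_eq m (x : Tup 0 m) : x = t0 m.
Proof. by apply/ffunP => -[]. Qed.

Lemma tup0_sum (R : nmodType) m (F : Tup 0 m -> R) : \sum_x F x = F (t0 m).
Proof. by rewrite (big_pred1 (t0 m)) // => x; rewrite /= (tup0_eq x) eqxx. Qed.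

Lemma T1fun_functor (k : fieldType) : is_functor (T1fun k).
Proof.
split; [|split].
- move=> m n f _ a x y /=; apply/ffunP => c; rewrite !ffunE.
  rewrite (eq_bigr (fun w => a * x w + y w)) => [|w _]; last by rewrite !ffunE.
  by rewrite big_split /= -mulr_sumr.
- move=> n v /=; apply/ffunP => c; rewrite ffunE.
  case: n v c => [|n] v c /=; last by case: c.
  by rewrite big_ord1 (ord1 c).
- move=> l m n g f hg hf v /=; apply/ffunP => c; rewrite !ffunE.
  case: l g hg c => [|l] g hg c; last by case: c.
  have m0 := surj0 hg; subst m.
  by rewrite /= big_ord1 ffunE.
Qed.

Lemma eps_nat (k : fieldType) : is_nat (F := Pfun k 0) (G := T1fun k) (@eps k).
Proof.
split.
- move=> n a x y /=; apply/ffunP => c; rewrite !ffunE.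
  rewrite (eq_bigr (fun w => a * x w + y w)) => [|w _]; last by rewrite !ffunE.
  by rewrite big_split /= -mulr_sumr.
- move=> m n f hf v /=; apply/ffunP => c; rewrite !ffunE.
  case: m f hf c => [|m] f hf c; last by case: c.
  have n0 := surj0 hf; subst n.
  rewrite /= big_ord1 ffunE.
  rewrite (eq_bigr (fun y => \sum_(x | tcomp hf x == y) v x)) => [|y _]; last by rewrite (PmapE hf).
  by rewrite (sum_fiber _ predT).
Qed.

Lemma eps_surj (k : fieldType) m (y : T1obj k m) : exists x : Pobj k 0 m, eps x = y.
Proof.
case: m y => [|m] y; last by exists 0; apply/ffunP => -[].
exists [ffun _ => y ord0]; apply/ffunP => c; rewrite !ffunE tup0_sum ffunE.
by rewrite (ord1 c).
Qed.

Definition tcons i m (x0 : Surj2 m) (x : Tup i m) : Tup i.+1 m :=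
  [ffun l => if unlift ord0 l is Some l' then x l' else x0].

Lemma tcons0 i m (x0 : Surj2 m) (x : Tup i m) : tcons x0 x ord0 = x0.
Proof. by rewrite ffunE unlift_none. Qed.

Lemma tconsS i m (x0 : Surj2 m) (x : Tup i m) l : tcons x0 x (lift ord0 l) = x l.
Proof. by rewrite ffunE liftK. Qed.

Lemma tl_tcons i m (x0 : Surj2 m) (x : Tup i m) : delta ord0 (tcons x0 x) = x.
Proof. by apply/ffunP => l; rewrite ffunE tconsS. Qed.

Lemma tcons_eta i m (x : Tup i.+1 m) : tcons (x ord0) (delta ord0 x) = x.
Proof.
apply/ffunP => l; rewrite ffunE; case: unliftP => [j ->|->] //; by rewrite ffunE.
Qed.

Lemma tcons_eq i m (x0 : Surj2 m) (x : Tup i m) (y : Tup i.+1 m) :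
  (tcons x0 x == y) = (y ord0 == x0) && (x == delta ord0 y).
Proof.
apply/eqP/andP => [<-|[/eqP h1 /eqP ->]]; first by rewrite tcons0 tl_tcons.
by rewrite -h1 tcons_eta.
Qed.

Lemma delta_tcons i m (x0 : Surj2 m) (x : Tup i.+1 m) (j : 'I_i.+1) :
  delta (lift ord0 j) (tcons x0 x) = tcons x0 (delta j x).
Proof.
apply/ffunP => l; rewrite ffunE.
case: (unliftP ord0 l) => [l' ->|->].
  have -> : lift (lift ord0 j) (lift ord0 l') = lift ord0 (lift j l').
    by apply: val_inj; rewrite /= /bump /= !add1n ltnS addnS.
  by rewrite !tconsS ffunE.
have -> : lift (lift ord0 j) ord0 = ord0 by apply: val_inj.
by rewrite !tcons0.
Qed.

Lemma sum_cons (R : zmodType) i m (x0 : Surj2 m) (P : pred (Tup i.+1 m)) (G : Tup i.+1 m -> R) :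
  \sum_(x | P x) (if x ord0 == x0 then G x else 0) =
  \sum_(x' | P (tcons x0 x')) G (tcons x0 x').
Proof.
rewrite -big_mkcondr (reindex_onto (tcons x0) (@delta i ord0 m)) /=.
  by apply: eq_bigl => x'; rewrite tcons0 tl_tcons !eqxx !andbT.
by move=> x /andP [_ /eqP <-]; rewrite tcons_eta.
Qed.

Definition hmap (k : fieldType) i m (x0 : Surj2 m) (v : Pobj k i m) : Pobj k i.+1 m :=
  [ffun y : Tup i.+1 m => if y ord0 == x0 then - v (delta ord0 y) else 0].

Lemma hmap0 (k : fieldType) i m (x0 : Surj2 m) : hmap x0 (0 : Pobj k i m) = 0.
Proof. by apply/ffunP => y; rewrite !ffunE oppr0 if_same. Qed.

Lemma hterm0 (k : fieldType) i m (x0 : Surj2 m) (v : Pobj k i m) y :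
  \sum_(x : Tup i.+1 m | delta ord0 x == y) hmap x0 v x = - v y.
Proof.
rewrite (eq_bigr (fun x : Tup _ m => if x ord0 == x0 then - v (delta ord0 x) else 0)) => [|x _]; last by rewrite ffunE.
rewrite sum_cons (big_pred1 y) ?tl_tcons // => x'; by rewrite /= tl_tcons.
Qed.

Lemma htermS (k : fieldType) i m (x0 : Surj2 m) (v : Pobj k i.+1 m) y (j : 'I_i.+1) :
  \sum_(x : Tup i.+2 m | delta (lift ord0 j) x == y) hmap x0 v x =
  if y ord0 == x0 then - \sum_(x' | delta j x' == delta ord0 y) v x' else 0.
Proof.
rewrite (eq_bigr (fun x : Tup _ m => if x ord0 == x0 then - v (delta ord0 x) else 0)) => [|x _]; last by rewrite ffunE.
rewrite sum_cons sumrN.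
rewrite (eq_bigl (fun x' => (y ord0 == x0) && (delta j x' == delta ord0 y))); last first.
  by move=> x'; rewrite /= delta_tcons tcons_eq.
case: (y ord0 =P x0) => _; last by rewrite big_pred0 ?oppr0.
by congr (- _); apply: eq_bigr => x' _; rewrite tl_tcons.
Qed.

Lemma H0 (k : fieldType) m (x0 : Surj2 m) (v : Pobj k 0 m) : dmap (hmap x0 v) = v.
Proof.
apply/ffunP => y; rewrite ffunE big_ord1 hterm0 /=.
by rewrite expr1 mulN1r opprK.
Qed.

Lemma HS (k : fieldType) i m (x0 : Surj2 m) (v : Pobj k i.+1 m) :
  dmap (hmap x0 v) + hmap x0 (dmap v) = v.
Proof.
apply/ffunP => y; rewrite !ffunE big_ord_recl hterm0 /= expr1 mulN1r opprK.
under eq_bigr do rewrite htermS.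
case: eqP => _; last by rewrite big1 ?addr0 // => j _; rewrite mulr0.
rewrite -addrA -[RHS]addr0; congr (_ + _).
rewrite -sumrN -big_split /= big1 // => j _.
by rewrite /bump /= add1n exprS mulN1r mulrN mulNr opprK subrr.
Qed.

Lemma dmap_lin (k : fieldType) i m a (v w : Pobj k i.+1 m) :
  dmap (a *: v + w) = a *: dmap v + dmap w.
Proof.
apply/ffunP => y; rewrite !ffunE.
rewrite (eq_bigr (fun j : 'I_i.+1 => a * ((-1) ^+ j.+1 * \sum_(x | delta j x == y) v x) +
   (-1) ^+ j.+1 * \sum_(x | delta j x == y) w x)) => [|j _].
  by rewrite big_split /= -mulr_sumr.
rewrite (eq_bigr (fun x => a * v x + w x)) => [|x _]; last by rewrite !ffunE.
by rewrite big_split /= -mulr_sumr mulrDr mulrCA.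
Qed.

Lemma dmap_morph (k : fieldType) i m :
  [/\ @dmap k i m 0 = 0, forall x y, @dmap k i m (x + y) = dmap x + dmap y,
      forall a x, @dmap k i m (a *: x) = a *: dmap x & forall x, @dmap k i m (- x) = - dmap x].
Proof. by apply: lin_morph => a x y; apply: dmap_lin. Qed.

Lemma dmap_sum (k : fieldType) i m (I : Type) (r : seq I) (P : pred I) (F : I -> Pobj k i.+1 m) :
  dmap (\sum_(j <- r | P j) F j) = \sum_(j <- r | P j) dmap (F j).
Proof. by apply: (lin_sum (t := @dmap k i m)) => a x y; apply: dmap_lin. Qed.

Definition part (k : fieldType) i m (x0 : Surj2 m) (w : Pobj k i.+1 m) : Pobj k i m :=
  [ffun x' => - w (tcons x0 x')].

Lemma decomp (k : fieldType) i m (w : Pobj k i.+1 m) :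
  w = \sum_(x0 : Surj2 m) hmap x0 (part x0 w).
Proof.
apply/ffunP => y; rewrite sum_ffunE.
rewrite (eq_bigr (fun x0 => if y ord0 == x0 then w y else 0)) => [|x0 _].
  by rewrite -big_mkcond (big_pred1 (y ord0)) // => x0; rewrite /= eq_sym.
rewrite !ffunE; case: eqP => [<-|] //; by rewrite ?ffunE opprK tcons_eta.
Qed.

Lemma DD (k : fieldType) i m (w : Pobj k i.+2 m) : dmap (dmap w) = 0.
Proof.
elim: i m w => [|i IH] m w; rewrite (decomp w) !dmap_sum big1 // => x0 _;
  set u := part x0 w.
- have -> : dmap (hmap x0 u) = u - hmap x0 (dmap u) by apply: (canRL (addrK _)); apply: HS.
  have [_ dD _ dN] := @dmap_morph k 0 m.
  by rewrite dD dN H0 subrr.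
- have -> : dmap (hmap x0 u) = u - hmap x0 (dmap u) by apply: (canRL (addrK _)); apply: HS.
  have [_ dD _ dN] := @dmap_morph k i.+1 m.
  rewrite dD dN.
  have -> : dmap (hmap x0 (dmap u)) = dmap u - hmap x0 (dmap (dmap u)).
    by apply: (canRL (addrK _)); apply: HS.
  by rewrite IH hmap0 subr0 subrr.
Qed.

Lemma Pobj_empty (k : fieldType) i (v : Pobj k i.+1 0) : v = 0.
Proof. apply/ffunP => x; exfalso; exact: surj2_0 (x ord0). Qed.

Lemma surj2_elt m : Surj2 m.+1.
Proof.
have h : surjb [ffun a : 'I_m.+2 => if a == ord0 then (ord0 : 'I_2) else ord_max].
  apply/forallP => c; apply/existsP.
  case: c => -[|[|c]] hc //.
    by exists ord0; rewrite ffunE eqxx; apply/eqP/val_inj.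
  by exists ord_max; rewrite ffunE; apply/eqP/val_inj.
exact (exist (fun f : {ffun 'I_m.+2 -> 'I_2} => surjb f) _ h : Surj2 m.+1).
Defined.

Lemma exact0 (k : fieldType) m (v : Pobj k 0 m) :
  eps v = 0 <-> exists w : Pobj k 1 m, dmap w = v.
Proof.
case: m v => [|m] v.
- split => [h|[w <-]].
    exists 0; have [-> _ _ _] := @dmap_morph k 0 0.
    apply/ffunP => x; rewrite (tup0_eq x) ffunE.
    have := congr1 (fun f : T1obj k 0 => f ord0) h; rewrite !ffunE tup0_sum => ->. done.
  rewrite (Pobj_empty w); have [-> _ _ _] := @dmap_morph k 0 0.
  by apply/ffunP => c; rewrite !ffunE big1 // => x _; rewrite ffunE.
- split => [_|_]; last by apply/ffunP => -[].
  by exists (hmap (surj2_elt m) v); apply: H0.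
Qed.

Lemma exactS (k : fieldType) i m (v : Pobj k i.+1 m) :
  dmap v = 0 <-> exists w : Pobj k i.+2 m, dmap w = v.
Proof.
split => [h|[w <-]]; last exact: DD.
case: m v h => [|m] v h.
  by exists 0; rewrite (Pobj_empty v); have [-> _ _ _] := @dmap_morph k i.+1 0.
exists (hmap (surj2_elt m) v).
by rewrite -{2}(HS (surj2_elt m) v) h hmap0 addr0.
Qed.

Lemma delta_tcomp i m n (f : {ffun 'I_m.+1 -> 'I_n.+1}) (hf : surjb f) (z : Tup i.+1 n) j :
  delta j (tcomp hf z) = tcomp hf (delta j z).
Proof. by apply/eqP/tup_eqP => l a; rewrite ffunE !tcompE ffunE. Qed.

Lemma dmap_nat (k : fieldType) i : is_nat (F := Pfun k i.+1) (G := Pfun k i) (@dmap k i).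
Proof.
split; first by move=> n a x y; apply: dmap_lin.
move=> m n f hf v /=; apply/ffunP => y.
rewrite [RHS](PmapE hf) ffunE.
rewrite (eq_bigr (fun j : 'I_i.+1 => (-1) ^+ j.+1 * \sum_(z | tcomp hf (delta j z) == y) v z)); last first.
  move=> j _; congr (_ * _).
  rewrite (eq_bigr (fun x => \sum_(z | tcomp hf z == x) v z)) => [|x _]; last by rewrite (PmapE hf).
  by rewrite sum_fiber; apply: eq_bigl => z; rewrite delta_tcomp.
rewrite (eq_bigr (fun w => \sum_(j < i.+1) (-1) ^+ j.+1 * \sum_(z | delta j z == w) v z)) => [|w _];
  last by rewrite ffunE.
rewrite exchange_big; apply: eq_bigr => j _; by rewrite -mulr_sumr sum_fiber.
Qed.

Definition Vt i : finType := {ffun 'I_i -> 'I_2}.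
Definition chi i m (x : Tup i m) : {ffun 'I_m.+1 -> Vt i} := [ffun a => [ffun l => val (x l) a]].
Definition Sx i m (x : Tup i m) : {set Vt i} := [set chi x a | a : 'I_m.+1].
Definition NS i (S : {set Vt i}) := #|S|.-1.
Definition v0 i : Vt i := [ffun _ => ord0].
Definition gl i (S : {set Vt i}) (l : 'I_i) : {ffun 'I_(NS S).+1 -> 'I_2} :=
  [ffun b : 'I_(NS S).+1 => (nth (v0 i) (enum S) b) l].
Definition gen i (S : {set Vt i}) : option (Tup i (NS S)) :=
  [pick e : Tup i (NS S) | [forall l, val (e l) == gl S l]].
Definition idx i m (S : {set Vt i}) (g : {ffun 'I_m.+1 -> Vt i}) : {ffun 'I_m.+1 -> 'I_(NS S).+1} :=
  [ffun a => inord (index (g a) (enum S))].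
Definition basis (k : fieldType) i m (e : Tup i m) : Pobj k i m := [ffun y => (y == e)%:R].

Lemma chi_in i m (x : Tup i m) a : chi x a \in enum (Sx x).
Proof. by rewrite mem_enum; apply/imsetP; exists a. Qed.

Lemma card_S i m (x : Tup i m) : #|Sx x| = (NS (Sx x)).+1.
Proof. rewrite /NS prednK //; apply/card_gt0P; exists (chi x ord0); by rewrite -mem_enum chi_in. Qed.

Lemma nthidx i m (x : Tup i m) a :
  nth (v0 i) (enum (Sx x)) (idx (Sx x) (chi x) a) = chi x a.
Proof.
rewrite ffunE inordK ?nth_index ?chi_in //.
by rewrite -card_S cardE index_mem chi_in.
Qed.

Lemma idx_surj i m (x : Tup i m) : surjb (idx (Sx x) (chi x)).
Proof.
apply/forallP => b.
have hb : (b < size (enum (Sx x)))%N by rewrite -cardE card_S.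
have : nth (v0 i) (enum (Sx x)) b \in Sx x by rewrite -mem_enum mem_nth.
move=> /imsetP [a _ ha]; apply/existsP; exists a; apply/eqP/val_inj.
by rewrite ffunE -ha index_uniq ?enum_uniq // inord_val.
Qed.

Lemma gl_surj i m (x : Tup i m) l : surjb (gl (Sx x) l).
Proof.
apply/forallP => c; have /forallP h := valP (x l); have /existsP [a /eqP ha] := h c.
by apply/existsP; exists (idx (Sx x) (chi x) a); rewrite ffunE nthidx !ffunE ha.
Qed.

Lemma gen_spec i m (x : Tup i m) :
  exists e, gen (Sx x) = Some e /\ (forall l b, val (e l) b = gl (Sx x) l b).
Proof.
rewrite /gen; case: pickP => [e /forallP he | hn].
  by exists e; split => // l b; rewrite (eqP (he l)).
exfalso.
have := hn [ffun l => (exist (fun f : {ffun 'I_(NS (Sx x)).+1 -> 'I_2} => surjb f) _ (gl_surj x l)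
   : Surj2 (NS (Sx x)))].
by move=> /forallP; apply => l; rewrite ffunE.
Qed.

Lemma tcomp_gen i m (x : Tup i m) (e : Tup i (NS (Sx x))) :
  (forall l b, val (e l) b = gl (Sx x) l b) -> tcomp (idx_surj x) e = x.
Proof. move=> he; apply/eqP/tup_eqP => l a. rewrite tcompE he. by rewrite [gl _ _ _]ffunE nthidx !ffunE. Qed.

Lemma chi_tcomp i m n (f : {ffun 'I_m.+1 -> 'I_n.+1}) (hf : surjb f) (x : Tup i n) :
  chi (tcomp hf x) = [ffun a => chi x (f a)].
Proof. by apply/ffunP => a; apply/ffunP => l; rewrite !ffunE /= ?ffunE. Qed.

Lemma Sx_tcomp i m n (f : {ffun 'I_m.+1 -> 'I_n.+1}) (hf : surjb f) (x : Tup i n) :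
  Sx (tcomp hf x) = Sx x.
Proof.
apply/setP => w; apply/imsetP/imsetP => [[a _ ->]|[b _ ->]].
  by exists (f a) => //; rewrite chi_tcomp [LHS]ffunE.
have /forallP h := hf; have /existsP [a /eqP ha] := h b.
by exists a => //; rewrite chi_tcomp [RHS]ffunE ha.
Qed.

Lemma basis_map (k : fieldType) i m n (F : {ffun 'I_m.+1 -> 'I_n.+1}) (hF : surjb F) (e : Tup i n) x :
  tcomp hF e = x -> Pmap F (basis k e) = basis k x.
Proof.
move=> he; apply/ffunP => y; rewrite (PmapE hF) ffunE.
rewrite (eq_bigr (fun w => if w == e then 1 else 0)) => [|w _]; last by rewrite ffunE; case: eqP.
rewrite -big_mkcondr; case: (y =P x) => [->|ne].
  rewrite (big_pred1 e) // => w /=; case: (w =P e) => [->|]; by rewrite ?andbF ?andbT ?he ?eqxx.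
rewrite big_pred0 // => w; case: (w =P e) => [->|]; rewrite ?andbF ?andbT // he.
by apply/eqP => h; apply: ne.
Qed.

Lemma sum_basis (k : fieldType) i m (v : Pobj k i m) : \sum_x v x *: basis k x = v.
Proof.
apply/ffunP => y; rewrite sum_ffunE (bigD1 y) //= big1 ?addr0.
  by rewrite !ffunE eqxx; exact: mulr1.
by move=> x hx; rewrite !ffunE eq_sym (negbTE hx); exact: mulr0.
Qed.

Definition Phi (k : fieldType) i (G : fdata k) (L : forall N, Tup i N -> fobj G N) m
  (S : {set Vt i}) (g : {ffun 'I_m.+1 -> Vt i}) : fobj G m :=
  match gen S with Some e => fmap G (idx S g) (L _ e) | None => 0 end.

Definition psi (k : fieldType) i (G : fdata k) (L : forall N, Tup i N -> fobj G N) m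
  (v : Pobj k i m) : fobj G m := \sum_x v x *: Phi L (Sx x) (chi x).

Lemma Phi_nat (k : fieldType) i (G : fdata k) (L : forall N, Tup i N -> fobj G N) :
  is_functor G -> forall m n (f : {ffun 'I_m.+1 -> 'I_n.+1}) (hf : surjb f) (x : Tup i n),
  Phi L (Sx (tcomp hf x)) (chi (tcomp hf x)) = fmap G f (Phi L (Sx x) (chi x)).
Proof.
move=> [hlin [_ hcomp]] m n f hf x; rewrite Sx_tcomp chi_tcomp /Phi.
case: (gen (Sx x)) => [e|]; last first.
  by have [-> _ _ _] := lin_morph (hlin _ _ _ hf).
have -> : idx (Sx x) [ffun a => chi x (f a)] = [ffun a => idx (Sx x) (chi x) (f a)].
  by apply/ffunP => a; rewrite !ffunE.
by apply: hcomp => //; apply: idx_surj.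
Qed.

Lemma Pproj (k : fieldType) i : projective (Pfun k i).
Proof.
move=> G H hG hH pi phi hpi hsurj hphi.
have hs : forall n y, exists x, pi n x == y.
  by move=> n y; have [x hx] := hsurj n y; exists x; apply/eqP.
pose L := fun N (e : Tup i N) => xchoose (hs N (phi N (basis k e))).
have hL : forall N e, pi N (L N e) = phi N (basis k e).
  by move=> N e; apply/eqP; apply: (xchooseP (hs N (phi N (basis k e)))).
have [hGlin _] := hG.
exists (fun m => @psi k i G L m); split; first split.
- move=> n a x y; rewrite /psi.
  rewrite (eq_bigr (fun z => a *: (x z *: Phi L (Sx z) (chi z)) + y z *: Phi L (Sx z) (chi z)))
    => [|z _]; first by rewrite big_split /= -scaler_sumr.
  by rewrite !ffunE scalerDl scalerA.
- move=> m n f hf v; rewrite /psi /=.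
  have [_ _ fZ _] := lin_morph (hGlin _ _ _ hf).
  rewrite (lin_sum _ _ _ (hGlin _ _ _ hf)).
  under [RHS]eq_bigr do rewrite fZ -(Phi_nat L hG hf).
  rewrite (eq_bigr (fun y => \sum_(x | tcomp hf x == y) v x *: Phi L (Sx (tcomp hf x)) (chi (tcomp hf x))))
    => [|y _]; first by rewrite (sum_fiber _ predT).
  rewrite (PmapE hf) scaler_suml; apply: eq_bigr => x /eqP -> //.
- move=> m v; rewrite /psi.
  have [hpil hpin] := hpi; have [hphil hphin] := hphi.
  have [_ _ piZ _] := lin_morph (hpil m).
  rewrite (lin_sum _ _ _ (hpil m)).
  rewrite -{2}(sum_basis v) (lin_sum _ _ _ (hphil m)).
  apply: eq_bigr => x _; rewrite piZ.
  have [_ _ phiZ _] := lin_morph (hphil m); rewrite phiZ; congr (_ *: _).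
  have [e [ge he]] := gen_spec x; rewrite /Phi ge.
  rewrite hpin; last exact: idx_surj.
  rewrite hL -hphin; last exact: idx_surj.
  by rewrite /= (basis_map _ (tcomp_gen he)).
Qed.

Unset Implicit Arguments.

Theorem lemma3p12 (k : fieldType) :
  (* each P_i = (s_2)^{(x) i} is a projective object of Fun(Gamma_-^o, k) *)
  (forall i : nat, is_functor (Pfun k i) /\ projective (Pfun k i)) /\
  is_functor (T1fun k) /\
  (* the augmentation and the differentials are morphisms of functors *)
  is_nat (F := Pfun k 0) (G := T1fun k) (@eps k) /\
  (forall i : nat, is_nat (F := Pfun k i.+1) (G := Pfun k i) (@dmap k i)) /\
  (* ... -> P_2 -> P_1 -> P_0 -> t_1 -> 0 is exact *)
  (forall m (y : T1obj k m), exists x : Pobj k 0 m, eps x = y) /\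
  (forall m (v : Pobj k 0 m), eps v = 0 <-> exists w : Pobj k 1 m, dmap w = v) /\
  (forall (i m : nat) (v : Pobj k i.+1 m),
     dmap v = 0 <-> exists w : Pobj k i.+2 m, dmap w = v).
Proof.
split; first by move=> i; split; [exact: Pfun_functor | exact: Pproj].
split; first exact: T1fun_functor.
split; first exact: eps_nat.
split; first exact: dmap_nat.
split; first exact: eps_surj.
split; first exact: exact0.
exact: exactS.
Qed.
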